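(* For each integer $n\ge 0$, let $\overline{m}_o(n)$ be the number of overpartitions $\pi$ of $n$ into odd parts such that no positive integer less than $\mathrm{omoex}(\pi)$ appears as an overlined part of $\pi$, and let $\overline{M}_o(q)=\sum_{n\ge 0}\overline{m}_o(n)q^n$. Then $$\overline{M}_o(q)=\frac{(-q;q^2)_\infty}{(q;q^2)_\infty}\bigl(1-F(-q)\bigr),\qquad\text{where } F(q)=\sum_{n=1}^{\infty}\frac{(-1)^n q^{n^2}}{(q;q^2)_n}.$$
   Context: An overpartition of $n$ is a partition of $n$ (a non-increasing sequence of positive integers summing to $n$) in which the first occurrence of each distinct part value may be overlined; an overpartition into odd parts is one all of whose parts are odd. For an overpartition $\pi$ into odd parts, $\mathrm{omoex}(\pi)$ is the smallest positive odd integer that does not occur as a part of $\pi$, neither overlined nor non-overlined (the empty overpartition of $0$ has $\mathrm{omoex}=1$). Notation: $(a;q)_n=\prod_{k=0}^{n-1}(1-aq^k)$, $(a;q)_\infty=\prod_{k\ge 0}(1-aq^k)$; identities are of formal power series in $q$ (equivalently analytic for $|q|<1$). *)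

(* Defs.v *)
From mathcomp Require Import all_boot all_order all_algebra.
Set Implicit Arguments. Unset Strict Implicit. Unset Printing Implicit Defensive.
Import Order.TTheory GRing.Theory Num.Theory.
Local Open Scope ring_scope.

(* Formal power series in q over rat: f n is the coefficient of q^n.   *)
Definition fps := nat -> rat.

Definition fconst (c : rat) : fps := fun n => if n == 0%N then c else 0.
Definition fone : fps := fconst 1.
Definition fmono (c : rat) (k : nat) : fps := fun n => if n == k then c else 0.
Definition fadd (f g : fps) : fps := fun n => f n + g n.
Definition fopp (f : fps) : fps := fun n => - f n.
Definition fsub (f g : fps) : fps := fadd f (fopp g).
Definition fmul (f g : fps) : fps :=
  fun n => \sum_(i < n.+1) f i * g (n - i)%N.
Definition fprod (s : seq fps) : fps := foldr fmul fone s.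

(* Multiplicative inverse of a series with nonzero constant term:
   the unique g with f * g = 1, computed coefficient by coefficient
   g_0 = 1/f_0,  g_m = -(1/f_0) * sum_{i=1}^m f_i g_{m-i}. *)
Fixpoint finv_list (f : fps) (m : nat) : seq rat :=
  match m with
  | 0 => [:: (f 0%N)^-1]
  | m'.+1 =>
      let s := finv_list f m' in
      rcons s (- (f 0%N)^-1 *
               \sum_(1 <= i < m'.+2) f i * nth 0 s (m'.+1 - i)%N)
  end.
Definition finv (f : fps) : fps := fun m => nth 0 (finv_list f m) m.
Definition fdiv (f g : fps) : fps := fmul f (finv g).

Definition fnegq (f : fps) : fps := fun n => (-1) ^+ n * f n.

(* Infinite product prod_{k>=0} F k, as the q-adic limit of the partial
   products; valid (and used only) when F k = 1 + O(q^(k+1)), in which case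
   the coefficient of q^n is already stable from the partial product over
   k <= n. *)
Definition fprodinf (F : nat -> fps) : fps :=
  fun n => fprod [seq F k | k <- iota 0 n.+1] n.
(* Infinite sum sum_{k>=0} F k, as the q-adic limit of the partial sums;
   valid (and used only) when F k = O(q^k). *)
Definition fsuminf (F : nat -> fps) : fps :=
  fun n => \sum_(k < n.+1) F k n.

(* q-Pochhammer symbols (c q^e; q^b)_n and (c q^e; q^b)_oo =
   prod_k (1 - c q^(e + b k)).  The infinite one is only used with e >= 1. *)
Definition qfactor (c : rat) (e b k : nat) : fps :=
  fsub fone (fmono c (e + b * k)).
Definition qpoch (c : rat) (e b n : nat) : fps :=
  fprod [seq qfactor c e b k | k <- iota 0 n].
Definition qpoch_inf (c : rat) (e b : nat) : fps :=
  fprodinf (qfactor c e b).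

(* F(q) = sum_{n>=1} (-1)^n q^(n^2) / (q;q^2)_n ; the summation index k
   stands for n = k+1 (term k is O(q^(k+1)^2) hence O(q^k)). *)
Definition Fser : fps :=
  fsuminf (fun k => fdiv (fmono ((-1) ^+ k.+1) (k.+1 ^ 2)) (qpoch 1 1 2 k.+1)).

Definition rhs_series : fps :=
  fmul (fdiv (qpoch_inf (-1) 1 2) (qpoch_inf 1 1 2)) (fsub fone (fnegq Fser)).

(* An overpartition is a list of parts (value, overlined?)
   listed in non-increasing order of value, where an overlined part must be
   the first occurrence of its value.  This is encoded by the relation
   [op_before x y] required between every earlier entry x and later entry y. *)
Definition op_before (x y : nat * bool) : bool :=
  (y.1 < x.1)%N || ((y.1 == x.1) && ~~ y.2).

Definition parts (s : seq (nat * bool)) : seq nat := map fst s.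

Definition is_odd_overpartition (n : nat) (s : seq (nat * bool)) : bool :=
  [&& all (fun p => odd p.1) s, sumn (parts s) == n & pairwise op_before s].

(* omoex: smallest positive odd integer 2i+1 not occurring as a part
   (overlined or not).  Some i <= size s works, so the search is exhaustive. *)
Definition omoex (s : seq (nat * bool)) : nat :=
  (2 * find (fun i => (2 * i).+1 \notin parts s) (iota 0 (size s).+1)).+1.

Definition omo_condition (s : seq (nat * bool)) : bool :=
  all (fun p => p.2 ==> (omoex s <= p.1)%N) s.

Fixpoint lists_of {T : Type} (A : seq T) (m : nat) : seq (seq T) :=
  match m with
  | 0 => [:: [::]]
  | m'.+1 => [seq x :: l | x <- A, l <- lists_of A m']
  end.

(* Candidates: all lists of length <= n of entries (v, b) with 1 <= v <= n;
   every overpartition of n is among them (each part is >= 1 and <= n),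
   each exactly once. *)
Definition candidates (n : nat) : seq (seq (nat * bool)) :=
  flatten [seq lists_of [seq (v, b) | v <- iota 1 n, b <- [:: false; true]] m
          | m <- iota 0 n.+1].

Definition mbar_o (n : nat) : nat :=
  count (fun s => is_odd_overpartition n s && omo_condition s) (candidates n).

Definition Mbar_o : fps := fun n => (mbar_o n)%:R.

(* Main.v *)
From HB Require Import structures.
From Pilot Require Import Defs.
From mathcomp Require Import all_boot all_order all_algebra.
From mathcomp Require Import boolp.
From mathcomp Require Import ring zify.
Import Pilot.Defs.
Set Implicit Arguments. Unset Strict Implicit. Unset Printing Implicit Defensive.
Set Warnings "-notation-overridden,-ambiguous-paths,-redundant-canonical-projection".
Import Order.TTheory GRing.Theory Num.Theory.

Definition Aset (n : nat) : seq (nat * bool) :=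
  [seq (v, b) | v <- iota 1 n, b <- [:: false; true]].

Lemma lists_of_mem (T : eqType) (A : seq T) m s :
  (s \in lists_of A m) = (size s == m) && all (mem A) s.
Proof.
elim: m s => [|m IH] s.
  by case: s.
case: s => [|x l] /=.
  by apply/allpairsP => -[[y z] [_ _]].
apply/allpairsP/idP => [[[y z] /= [hy hz [-> ->]]]|].
  by move: hz; rewrite IH eqSS => /andP [-> ->]; rewrite hy.
rewrite eqSS => /andP [hs /andP [hx hl]].
by exists (x, l); split => //=; rewrite IH hs.
Qed.

Lemma lists_of_uniq (T : eqType) (A : seq T) m : uniq A -> uniq (lists_of A m).
Proof.
move=> hA; elim: m => [|m IH] //=.
apply: allpairs_uniq => // -[x l] [y k] _ _ /= [-> ->] //.
Qed.

Lemma flatten_uniq_size (T : eqType) (F : nat -> seq (seq T)) (r : seq nat) :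
  uniq r -> (forall m, uniq (F m)) -> (forall m s, s \in F m -> size s = m) ->
  uniq (flatten [seq F m | m <- r]).
Proof.
move=> hr hu hs; elim: r hr => [|m r IH] //= /andP [hm hr].
rewrite cat_uniq hu IH // andbT.
apply/hasPn => s /flatten_mapP [m' hm' hs'] /=; apply/negP => hsm.
move: (hs _ _ hs') (hs _ _ hsm) => e1 e2.
by move: hm; rewrite -e2 e1 hm'.
Qed.

Lemma cand_uniq n : uniq (candidates n).
Proof.
apply: flatten_uniq_size; first exact: iota_uniq.
- move=> m; apply: lists_of_uniq.
  apply: allpairs_uniq => //; first exact: iota_uniq.
  by move=> [a b] [c d] _ _ /= [-> ->].
- by move=> m s; rewrite lists_of_mem => /andP [/eqP].
Qed.

Lemma cand_mem n s : (s \in candidates n) = (size s <= n)%N && all (mem (Aset n)) s.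
Proof.
apply/flatten_mapP/idP => [[m hm]|/andP [h1 h2]].
  move: hm; rewrite mem_iota add0n ltnS => /andP [_ hm].
  by rewrite lists_of_mem => /andP [/eqP e ->]; rewrite e hm.
by exists (size s); rewrite ?mem_iota ?ltnS ?lists_of_mem ?eqxx //.
Qed.

Definition valid n s := is_odd_overpartition n s.

Lemma valid_nil n : valid n [::] = (n == 0)%N.
Proof. by rewrite /valid /is_odd_overpartition /= eq_sym andbT. Qed.

Lemma valid_cons n x u : valid n (x :: u) =
  [&& odd x.1, (x.1 <= n)%N, valid (n - x.1) u & all (op_before x) u].
Proof.
rewrite /valid /is_odd_overpartition /=.
have -> : (x.1 + sumn (parts u) == n) = (x.1 <= n)%N && (sumn (parts u) == n - x.1).
  case: leqP => h /=; last by apply/negP => /eqP e; move: h; rewrite -e ltnNge leq_addr.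
  by rewrite -{1}(subnK h) addnC eqn_add2r.
by case: (odd x.1); case: (all _ u); case: (x.1 <= n)%N; case: (sumn _ == _);
   case: (all (op_before x) u); case: (pairwise _ u).
Qed.

Lemma opb_le x y : op_before x y -> (y.1 <= x.1)%N.
Proof. by rewrite /op_before => /orP [/ltnW //|/andP [/eqP -> _]]. Qed.

Lemma valid_head_le n x u : valid n (x :: u) -> all (fun p => p.1 <= x.1)%N u.
Proof.
rewrite valid_cons => /and4P [_ _ _ h]; apply/allP => p hp.
by apply: opb_le; move/allP: h; apply.
Qed.

Lemma valid_sum n s : valid n s -> sumn (parts s) = n.
Proof. by move=> /and3P [_ /eqP -> _]. Qed.

Lemma valid_odd n s : valid n s -> all (fun p => odd p.1) s.
Proof. by move=> /and3P []. Qed.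

Lemma size_le_sum s : all (fun p => odd p.1) s -> (size s <= sumn (parts s))%N.
Proof.
elim: s => //= x s IH /andP [hx hs].
by rewrite -add1n leq_add // ?IH //; case: x.1 hx.
Qed.

Lemma part_le_sum s p : p \in s -> (p.1 <= sumn (parts s))%N.
Proof.
elim: s => //= x s IH; rewrite in_cons => /orP [/eqP ->|h]; first exact: leq_addr.
by rewrite (leq_trans (IH h)) // leq_addl.
Qed.

Lemma valid_cand n s : valid n s -> s \in candidates n.
Proof.
move=> hv; rewrite cand_mem -{1}(valid_sum hv) size_le_sum ?(valid_odd hv) //=.
apply/allP => p hp; apply/allpairsP; exists (p.1, p.2); split => /=; last by case: p hp.
  rewrite mem_iota add1n ltnS -(valid_sum hv) part_le_sum // andbT.
  by move/allP: (valid_odd hv) => /(_ p hp); case: p.1.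
by case: p.2.
Qed.

Definition bnd k (s : seq (nat * bool)) := all (fun p : nat * bool => (p.1 < 2 * k)%N) s.
Definition fullk k s := all (fun i => (2 * i).+1 \in parts s) (iota 0 k).
Definition omo' (s : seq (nat * bool)) := all (fun p : nat * bool => p.2 ==> ~~ fullk p.1./2 s) s.

Lemma omoex_le s j : (2 * j).+1 \in parts s ->
  (omoex s <= (2 * j).+1)%N = ~~ fullk j s.
Proof.
move=> hj; rewrite /omoex ltnS leq_pmul2l // /fullk -has_predC.
set a := fun i => (2 * i).+1 \notin parts s.
have -> : has (predC (fun i => (2 * i).+1 \in parts s)) (iota 0 j) = has a (iota 0 j) by [].
set L := (size s).+1.
apply/idP/idP => [hf|/hasP [i hi ha]].
  case h: (has a (iota 0 L)).
    have hfL : (find a (iota 0 L) < L)%N by rewrite -{2}(size_iota 0 L) -has_find.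
    have := nth_find 0 h; rewrite nth_iota // add0n => haf.
    apply/hasP; exists (find a (iota 0 L)) => //.
    rewrite mem_iota add0n leq0n /=; rewrite leq_eqVlt in hf.
    case/orP: hf => // /eqP e; by move: haf; rewrite /a e hj.
  exfalso; move/negbT: h => h; move: (hasNfind h); rewrite size_iota => hL.
  have hsub : {subset [seq (2 * i).+1 | i <- iota 0 L] <= parts s}.
    move=> x /mapP [i hi ->]; move/hasPn: h => /(_ i hi); by rewrite /a negbK.
  have := uniq_leq_size _ hsub; rewrite size_map size_iota size_map /L ltnn.
  have hu : uniq [seq (2 * i).+1 | i <- iota 0 (size s).+1].
    rewrite map_inj_uniq ?iota_uniq // => x y [] /eqP.
    by rewrite eqn_mul2l /= => /eqP.
  by move=> /(_ hu).
have hij : (i < j)%N by move: hi; rewrite mem_iota.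
case: (ltnP i L) => hiL.
  have hfi : (find a (iota 0 L) <= i)%N.
    rewrite leqNgt; apply/negP => hlt.
    by move: (before_find 0 hlt); rewrite nth_iota // add0n ha.
  exact: leq_trans hfi (ltnW hij).
apply: leq_trans (find_size _ _) _; rewrite size_iota; exact: leq_trans hiL (ltnW hij).
Qed.

Lemma omo_equiv n s : valid n s -> omo_condition s = omo' s.
Proof.
move=> hv; apply: eq_in_all => p hp /=.
have hodd : odd p.1 by move/allP: (valid_odd hv) => /(_ p hp).
have e : p.1 = (2 * p.1./2).+1 by rewrite -{1}(odd_double_half p.1) hodd mul2n.
rewrite {1}e omoex_le // -e; exact: map_f.
Qed.

Definition Yc k n (c : bool -> bool) :=
  count (fun s => [&& valid n s, bnd k s, omo' s & c (fullk k s)]) (candidates n).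
Definition Xc k n b (c : bool -> bool) :=
  count (fun s => [&& valid n s, bnd k.+1 s, ohead s == Some ((2 * k).+1, b), omo' s
                   & c (fullk k s)]) (candidates n).

Lemma mbar_Yc n k : (n < 2 * k)%N -> mbar_o n = Yc k n (fun _ => true).
Proof.
move=> hk; rewrite /mbar_o /Yc; apply: eq_in_count => s _ /=.
rewrite /valid; case hv: (is_odd_overpartition n s) => //=.
rewrite (omo_equiv hv) andbT.
suff -> : bnd k s by [].
apply/allP => p hp /=; apply: leq_ltn_trans hk.
by rewrite -(valid_sum hv) part_le_sum.
Qed.

Lemma count_split3 (T : Type) (P a b c : pred T) s :
  (forall x, P x -> a x + b x + c x = 1)%N ->
  count P s = (count (fun x => P x && a x) s + count (fun x => P x && b x) s
               + count (fun x => P x && c x) s)%N.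
Proof.
move=> h; elim: s => //= x s ->.
case hP: (P x) => /=; last by rewrite !add0n.
move: (h x hP); case: (a x); case: (b x); case: (c x) => //= _; lia.
Qed.

Lemma count_split2 (T : Type) (P a : pred T) s :
  count P s = (count (fun x => P x && a x) s + count (fun x => P x && ~~ a x) s)%N.
Proof.
elim: s => //= x s ->.
case: (P x); case: (a x) => /=; lia.
Qed.

Lemma count_cons_bij (T : eqType) (x : T) (U1 U2 : seq (seq T)) (P1 P2 : pred (seq T)) :
  uniq U1 -> uniq U2 ->
  (forall u, P2 u -> u \in U2 -> P1 (x :: u) && (x :: u \in U1)) ->
  (forall s, P1 s -> s \in U1 -> exists2 u, s = x :: u & P2 u && (u \in U2)) ->
  count P1 U1 = count P2 U2.
Proof.
move=> hu1 hu2 H1 H2.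
rewrite -!size_filter -(size_map (cons x) (filter P2 U2)).
apply: perm_size; apply: uniq_perm.
- exact: filter_uniq.
- by rewrite map_inj_uniq ?filter_uniq // => a b [].
move=> y; rewrite mem_filter; apply/andP/mapP => [[h1 h2]|[u hu ->]].
  have [u -> hu] := H2 y h1 h2; exists u => //; by rewrite mem_filter.
move: hu; rewrite mem_filter => /andP [hp hu]; exact/andP/H1.
Qed.

Lemma fullk_cons j x u : (2 * j <= x.1)%N -> fullk j (x :: u) = fullk j u.
Proof.
move=> h; apply: eq_in_all => i; rewrite mem_iota add0n => /andP [_ hi] /=.
rewrite in_cons; case: eqP => //= e.
exfalso; move: h hi; rewrite -e; lia.
Qed.

Lemma fullkS k s : fullk k.+1 s = fullk k s && ((2 * k).+1 \in parts s).
Proof. by rewrite /fullk -[k.+1]addn1 iotaD all_cat /= andbT. Qed.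

Lemma half_odd k : ((2 * k).+1)./2 = k.
Proof. by rewrite mul2n -add1n (half_bit_double k true). Qed.

Lemma half_le2 m : (2 * m./2 <= m)%N.
Proof. by rewrite -{2}(odd_double_half m) mul2n leq_addl. Qed.

Lemma omo_cons k b u : all (op_before ((2 * k).+1, false)) u ->
  omo' (((2 * k).+1, b) :: u) = (b ==> ~~ fullk k u) && omo' u.
Proof.
move=> hu; rewrite /omo' [all _ (_ :: _)]/=.
have -> : uphalf (2 * k) = k by rewrite mul2n uphalf_double.
rewrite fullk_cons ?leqnSn //; congr andb.
apply: eq_in_all => p hp /=.
case hp2: p.2 => //=.
have hlt : (p.1 < (2 * k).+1)%N.
  move/allP: hu => /(_ p hp); rewrite /op_before /= hp2 andbF orbF //.
by rewrite fullk_cons // (leq_trans (half_le2 _)) // -ltnS ltnW.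
Qed.

Lemma optE (a b : nat * bool) : (Some a == Some b) = (a == b). Proof. by []. Qed.

Lemma split3 m k s : valid m s -> bnd k.+1 s ->
  (bnd k s + (ohead s == Some ((2 * k).+1, false)) + (ohead s == Some ((2 * k).+1, true)) = 1)%N.
Proof.
case: s => [|y u] // hv hb.
have hle := valid_head_le hv.
have hodd : odd y.1 by move: hv; rewrite valid_cons => /andP [].
move: hb; rewrite /bnd /= => /andP [hy hbu].
case: (ltnP y.1 (2 * k)) => h /=.
  have -> : all (fun p : nat * bool => (p.1 < 2 * k)%N) u.
    apply/allP => p hp; move/allP: hle => /(_ p hp) /= hp1; exact: leq_ltn_trans hp1 h.
  case: y hv hodd hle hy h => y1 y2 /= _ hodd _ hy h.
  have ne : y1 != (2 * k).+1 by apply/eqP => e; move: h; rewrite e ltnNge leqnSn.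
  by rewrite !optE !xpair_eqE (negbTE ne).
have e : y.1 = (2 * k).+1.
  have ne : y.1 != 2 * k by apply/eqP => e; move: hodd; rewrite e oddM.
  move: ne hy h; rewrite mulnS; lia.
case: y e {hv hodd hle hy h} => y1 y2 /= ->.
by rewrite !optE !xpair_eqE eqxx; case: y2.
Qed.

Lemma count0 (T : eqType) (P : pred T) s : (forall x, x \in s -> ~~ P x) -> count P s = 0%N.
Proof. by move=> h; apply/eqP; rewrite -leqn0 leqNgt -has_count; apply/hasPn. Qed.

Lemma bnd_S k u : bnd k u -> bnd k.+1 u.
Proof.
move=> /allP h; apply/allP => p /h /= hp; apply: leq_trans hp _; rewrite leq_mul2l /=; lia.
Qed.

Lemma bnd_opb k u : bnd k u -> all (op_before ((2 * k).+1, false)) u.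
Proof.
move=> /allP h; apply/allP => p /h /= hp; rewrite /op_before /=.
by rewrite (leq_trans hp) ?leqnSn.
Qed.

Lemma oddv k : odd (2 * k).+1. Proof. by rewrite /= oddM. Qed.

Lemma Xc_rec k n b c : Xc k n b c =
  if ((2 * k).+1 <= n)%N then
    (Yc k (n - (2 * k).+1) (fun x => c x && (b ==> ~~ x)) +
     Xc k (n - (2 * k).+1) false (fun x => c x && (b ==> ~~ x)))%N
  else 0%N.
Proof.
set v := (2 * k).+1; set c' := fun x => c x && (b ==> ~~ x).
case: (leqP v n) => hv /=; last first.
  rewrite /Xc; apply: count0 => s _.
  apply/negP => /and5P [hval _ hoh _ _].
  case: s hval hoh => //= x u; rewrite valid_cons optE => /and4P [_ hx _ _] /eqP ex.
  by move: hx; rewrite ex /= leqNgt hv.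
pose P2 := fun u => [&& valid (n - v) u, bnd k.+1 u, all (op_before (v, false)) u,
                       omo' u & c' (fullk k u)].
have key : forall u, [&& valid n ((v, b) :: u), bnd k.+1 ((v, b) :: u),
     ohead ((v, b) :: u) == Some (v, b), omo' ((v, b) :: u) & c (fullk k ((v, b) :: u))] = P2 u.
  have hov : odd v := oddv k.
  move=> u; rewrite /P2 valid_cons [(v, b).1]/= hov hv optE eqxx /=.
  have hvb : (v < 2 * k.+1)%N by rewrite /v mulnS; lia.
  rewrite /bnd /= hvb /=.
  case hO: (all (op_before (v, false)) u); last first.
    by case: (valid _ u); case: (all _ u).
  rewrite omo_cons // fullk_cons ?leqnSn // /c'.
  move: (valid _ u) (all _ u) (omo' u) (fullk k u) => V B M F.
  by case: V; case: B; case: M; case: F; case: (b); case: (c true); case: (c false).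
have -> : Xc k n b c = count P2 (candidates (n - v)).
  apply: (count_cons_bij (x := (v, b))); try exact: cand_uniq.
    move=> u hu _; rewrite key hu /=; apply: valid_cand.
    by move: hu; rewrite -key => /andP [].
  move=> s hs _; case: s hs => [|x u]; first by rewrite /= !andbF.
  move=> hs; have ex : x = (v, b) by move: hs => /and5P [_ _ /eqP [->] _ _].
  subst x; exists u => //; rewrite -key hs /=.
  by move: hs => /andP [+ _]; rewrite valid_cons => /and4P [_ _ hu _]; apply: valid_cand.
rewrite (@count_split3 _ P2 (fun u => bnd k u) (fun u => ohead u == Some (v, false))
           (fun u => ohead u == Some (v, true))); last first.
  by move=> u /and5P [hu hb _ _ _]; exact: split3 hu hb.
rewrite [X in (_ + _ + X)%N]count0 ?addn0; last first.
  move=> u _; apply/negP => /andP [/and5P [_ _ hO _ _] hh].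
  case: u hO hh => [|x u] //= /andP [hx _] /eqP [ex].
  by move: hx; rewrite ex /op_before /= ltnn eqxx.
congr addn; apply: eq_count => u /=.
  case hb: (bnd k u); last by rewrite andbF; case: (valid _ u).
  by rewrite andbT /P2 (bnd_S hb) (bnd_opb hb).
rewrite /P2 -!andbA; congr andb; congr andb.
case: u => [|x u]; first by rewrite /= !andbF.
case hx: (ohead (x :: u) == Some (v, false)); last by rewrite !andbF.
move: hx => /eqP [ex]; subst x.
rewrite /c' /= {3}/op_before /= ltnn eqxx /=.
move: (all _ u) (pairwise _ u) (_ && bnd k.+1 u) (omo' _) (c _) (b ==> _) => A B C D E F.
by case: A; case: B; case: C; case: D; case: E; case: F.
Qed.

Lemma bnd_notin k s : bnd k s -> (2 * k).+1 \notin parts s.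
Proof.
move=> /allP h; apply/mapP => -[p hp e]; move: (h p hp) => /=.
by rewrite -e ltnNge leqnSn.
Qed.

Lemma Yc_rec k n c :
  Yc k.+1 n c = (Yc k n (fun _ => c false) + Xc k n false c + Xc k n true c)%N.
Proof.
set v := (2 * k).+1.
rewrite {1}/Yc (@count_split3 _ _ (fun u => bnd k u) (fun u => ohead u == Some (v, false))
           (fun u => ohead u == Some (v, true))); last first.
  by move=> u /and4P [hu hb _ _]; exact: split3 hu hb.
congr (_ + _ + _)%N; apply: eq_count => s /=.
- case hb: (bnd k s); last by rewrite andbF; case: (valid _ s).
  by rewrite andbT (bnd_S hb) fullkS (negbTE (bnd_notin hb)) andbF.
- case: s => [|x u]; first by rewrite /= !andbF.
  case hx: (ohead (x :: u) == Some (v, false)); last by rewrite !andbF.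
  move: hx => /eqP [ex]; subst x.
  by rewrite fullkS /= in_cons eqxx /= !andbT.
- case: s => [|x u]; first by rewrite /= !andbF.
  case hx: (ohead (x :: u) == Some (v, true)); last by rewrite !andbF.
  move: hx => /eqP [ex]; subst x.
  by rewrite fullkS /= in_cons eqxx /= !andbT.
Qed.

Lemma Yc0 n (c : bool -> bool) : c true -> Yc 0 n c = (n == 0)%N.
Proof.
move=> hc; rewrite /Yc /candidates /= valid_nil /fullk /= hc andbT count0 ?addn0 //.
move=> s /flatten_mapP [m hm]; rewrite lists_of_mem => /andP [/eqP hs _].
case: s hs => [|x s] /=; first by move=> e; move: hm; rewrite -e mem_iota.
by rewrite !andbF.
Qed.

Lemma Yc_ext k n c1 c2 : c1 =1 c2 -> Yc k n c1 = Yc k n c2.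
Proof. by move=> h; apply: eq_count => s; rewrite h. Qed.
Lemma Xc_ext k n b c1 c2 : c1 =1 c2 -> Xc k n b c1 = Xc k n b c2.
Proof. by move=> h; apply: eq_count => s; rewrite h. Qed.

Lemma Yc_false k n : Yc k n (fun _ => false) = 0%N.
Proof. by apply: count0 => s _; rewrite !andbF. Qed.

Lemma Yc_split k n : Yc k n (fun _ => true) = (Yc k n id + Yc k n negb)%N.
Proof.
rewrite /Yc (count_split2 _ (fun s => fullk k s)); congr addn; apply: eq_count => s /=.
  by rewrite andbT -!andbA.
by rewrite andbT -!andbA.
Qed.

Local Open Scope ring_scope.

Definition pser : Type := nat -> rat.
HB.instance Definition _ := gen_eqMixin pser.
HB.instance Definition _ := gen_choiceMixin pser.

Lemma faddA : associative (fadd : pser -> pser -> pser).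
Proof. by move=> f g h; apply: funext => n; rewrite /fadd addrA. Qed.
Lemma faddC : commutative (fadd : pser -> pser -> pser).
Proof. by move=> f g; apply: funext => n; rewrite /fadd addrC. Qed.
Lemma fadd0 : left_id (fconst 0 : pser) fadd.
Proof. by move=> f; apply: funext => n; rewrite /fadd /fconst; case: eqP; rewrite add0r. Qed.
Lemma faddN : left_inverse (fconst 0 : pser) fopp fadd.
Proof. by move=> f; apply: funext => n; rewrite /fadd /fopp /fconst addNr; case: eqP. Qed.
HB.instance Definition _ := GRing.isZmodule.Build pser faddA faddC fadd0 faddN.

Definition P (n : nat) (f : pser) : {poly rat} := \poly_(i < n.+1) f i.

Lemma fmul_poly (f g : pser) n (p q : {poly rat}) :
  (forall i, (i <= n)%N -> p`_i = f i) -> (forall i, (i <= n)%N -> q`_i = g i) ->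
  fmul f g n = (p * q)`_n.
Proof.
move=> hp hq; rewrite coefM /fmul; apply: eq_bigr => i _.
by rewrite hp ?hq // ?leq_subr // -ltnS.
Qed.

Lemma coefP n (f : pser) i : (i <= n)%N -> (P n f)`_i = f i.
Proof. by move=> h; rewrite coef_poly ltnS h. Qed.

Lemma fmulPP (f g : pser) n i : (i <= n)%N -> fmul f g i = (P n f * P n g)`_i.
Proof.
move=> hi; apply: fmul_poly => j hj; apply: coefP; exact: leq_trans hj hi.
Qed.

Lemma fmulA : associative (fmul : pser -> pser -> pser).
Proof.
move=> f g h; apply: funext => n.
rewrite (@fmul_poly _ _ n (P n f) (P n g * P n h)); last 2 first.
- by move=> i hi; rewrite coefP.
- by move=> i hi; rewrite (fmulPP _ _ hi).
rewrite (@fmul_poly _ _ n (P n f * P n g) (P n h)) ?mulrA //.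
- by move=> i hi; rewrite (fmulPP _ _ hi).
- by move=> i hi; rewrite coefP.
Qed.

Lemma fmulC : commutative (fmul : pser -> pser -> pser).
Proof. by move=> f g; apply: funext => n; rewrite !(@fmulPP _ _ n n) // mulrC. Qed.

Lemma fmul1 : left_id (fone : pser) fmul.
Proof.
move=> f; apply: funext => n; rewrite /fmul big_ord_recl /fone /fconst /= mul1r subn0.
rewrite big1 ?addr0 // => i _; by rewrite mul0r.
Qed.

Lemma fmulDl : left_distributive (fmul : pser -> pser -> pser) fadd.
Proof.
move=> f g h; apply: funext => n; rewrite /fmul /fadd -big_split /=.
by apply: eq_bigr => i _; rewrite mulrDl.
Qed.

Lemma fone_neq0 : (fone : pser) != 0.
Proof.
apply/eqP => /(congr1 (fun f : pser => f 0%N)); rewrite /fone /fconst /=.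
by move/eqP; rewrite oner_eq0.
Qed.
HB.instance Definition _ := GRing.Zmodule_isComNzRing.Build pser fmulA fmulC fmul1 fmulDl fone_neq0.


Lemma fmulE (f g : pser) : fmul f g = f * g. Proof. by []. Qed.
Lemma faddE (f g : pser) : fadd f g = f + g. Proof. by []. Qed.
Lemma fsubE (f g : pser) : fsub f g = f - g. Proof. by []. Qed.
Lemma foneE : (fone : pser) = 1. Proof. by []. Qed.
Lemma fmono10 : (fmono 1 0 : pser) = 1. Proof. by []. Qed.
Lemma addfE (f g : pser) n : (f + g) n = f n + g n. Proof. by []. Qed.
Lemma oppfE (f : pser) n : (- f) n = - f n. Proof. by []. Qed.
Lemma subfE (f g : pser) n : (f - g) n = f n - g n. Proof. by []. Qed.
Lemma zerofE n : (0 : pser) n = 0. Proof. by case: n. Qed.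
Lemma mulfE (f g : pser) n : (f * g) n = \sum_(i < n.+1) f i * g (n - i)%N. Proof. by []. Qed.
Lemma sumfE I (r : seq I) (Pr : pred I) (F : I -> pser) n :
  (\sum_(i <- r | Pr i) F i) n = \sum_(i <- r | Pr i) F i n.
Proof.
elim/big_rec2: _ => [|i y1 y2 _ <-]; first by rewrite zerofE.
by rewrite addfE.
Qed.

Lemma fprodE (s : seq pser) : fprod s = \prod_(x <- s) x.
Proof. elim: s => [|x s IH]; first by rewrite big_nil. by rewrite big_cons /= IH. Qed.

Lemma coef_monoM c k (f : pser) n :
  ((fmono c k : pser) * f) n = if (k <= n)%N then c * f (n - k)%N else 0.
Proof.
rewrite mulrC -fmulE (@fmul_poly _ _ n (P n f) (c *: 'X^k)); last 2 first.
- by move=> i hi; rewrite coefP.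
- by move=> i _; rewrite coefZ coefXn /fmono; case: (i == k); rewrite ?mulr1 ?mulr0.
rewrite -scalerAr coefZ coefMXn ltnNge; case: leqP => h; last by rewrite mulr0.
by rewrite coefP // leq_subr.
Qed.

Lemma fmonoM c d a b : (fmono c a : pser) * (fmono d b : pser) = fmono (c * d) (a + b).
Proof.
apply: funext => n; rewrite coef_monoM /fmono.
case: leqP => h.
  have -> : (n == a + b)%N = (n - a == b)%N by rewrite -{1}(subnK h) addnC eqn_add2l.
  by case: (n - a == b)%N; rewrite ?mulr0.
case: eqP => // e; move: h; rewrite e; by rewrite ltnNge leq_addr.
Qed.

Lemma fmonoN c k : (fmono (- c) k : pser) = - (fmono c k : pser).
Proof. by apply: funext => n; rewrite oppfE /fmono; case: eqP; rewrite ?oppr0. Qed.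

Lemma fmono0 k : (fmono 0 k : pser) = 0.
Proof. by apply: funext => n; rewrite zerofE /fmono; case: eqP. Qed.

Definition eqN N (f g : pser) := forall i, (i <= N)%N -> f i = g i.

Lemma eqN_refl N f : eqN N f f. Proof. by []. Qed.
Lemma eqN_sym N f g : eqN N f g -> eqN N g f. Proof. by move=> h i hi; rewrite h. Qed.
Lemma eqN_trans N f g h : eqN N f g -> eqN N g h -> eqN N f h.
Proof. by move=> h1 h2 i hi; rewrite h1 ?h2. Qed.
Lemma eqN_le N M f g : (M <= N)%N -> eqN N f g -> eqN M f g.
Proof. by move=> hM h i hi; rewrite h // (leq_trans hi hM). Qed.
Lemma eqN_mul N f f' g g' : eqN N f f' -> eqN N g g' -> eqN N (f * g) (f' * g').
Proof.
move=> h1 h2 i hi; rewrite !mulfE; apply: eq_bigr => j _.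
have hj : (j <= N)%N by rewrite (leq_trans _ hi) // -ltnS.
by rewrite h1 // h2 // (leq_trans (leq_subr _ _) hi).
Qed.
Lemma eqN_add N f f' g g' : eqN N f f' -> eqN N g g' -> eqN N (f + g) (f' + g').
Proof. by move=> h1 h2 i hi; rewrite !addfE h1 ?h2. Qed.
Lemma eqN_opp N f f' : eqN N f f' -> eqN N (- f) (- f').
Proof. by move=> h1 i hi; rewrite !oppfE h1. Qed.

Lemma size_finv_list (f : fps) m : size (finv_list f m) = m.+1.
Proof. by elim: m => //= m IH; rewrite size_rcons IH. Qed.

Lemma nth_finv_list (f : fps) m i : (i <= m)%N -> nth 0 (finv_list f m) i = finv f i.
Proof.
elim: m => [|m IH]; first by rewrite leqn0 => /eqP ->.
rewrite leq_eqVlt => /orP [/eqP -> //|hi].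
by rewrite /= nth_rcons size_finv_list hi IH.
Qed.

Lemma finvS (f : fps) m : finv f m.+1 =
  - (f 0%N)^-1 * \sum_(i < m.+1) f i.+1 * finv f (m - i)%N.
Proof.
rewrite {1}/finv /= nth_rcons size_finv_list ltnn eqxx.
congr (_ * _).
rewrite -(big_mkord xpredT (fun i => f i.+1 * finv f (m - i)%N)).
rewrite (big_add1 _ _ 0 m.+2) /=.
by apply: eq_bigr => i _; rewrite subSS nth_finv_list // leq_subr.
Qed.

Lemma mulfV (f : pser) : f 0%N != 0 -> f * (finv f : pser) = 1.
Proof.
move=> h0; apply: funext => n; case: n => [|m].
  rewrite mulfE big_ord1 /= /finv /= /fconst /=. by rewrite mulfV.
rewrite mulfE big_ord_recl /= subn0 finvS mulrA mulrN mulfV // mulN1r.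
rewrite /= /fconst /=.
rewrite addrC; apply/eqP; rewrite subr_eq0; apply/eqP.
by apply: eq_bigr => i _; rewrite /bump /= add1n subSS.
Qed.

Lemma inv_uniq (a b c : pser) : a * b = 1 -> a * c = 1 -> b = c.
Proof.
move=> hb hc; by rewrite -[b]mulr1 -hc mulrA (mulrC b) hb mul1r.
Qed.

Lemma coef0M (f g : pser) : (f * g) 0%N = f 0%N * g 0%N.
Proof. by rewrite mulfE big_ord1. Qed.

Lemma eqN_inv N (f g : pser) : f 0%N != 0 -> eqN N f g -> eqN N (finv f) (finv g).
Proof.
move=> h0 e.
have g0 : g 0%N != 0 by rewrite -e.
have h := eqN_mul (@eqN_refl N (finv f)) (eqN_mul e (@eqN_refl N (finv g))).
have e1 : (finv f : pser) * (f * (finv g : pser)) = finv g.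
  by rewrite mulrA (mulrC (finv f : pser)) mulfV // mul1r.
have e2 : (finv f : pser) * (g * (finv g : pser)) = finv f by rewrite mulfV // mulr1.
by rewrite e1 e2 in h; apply: eqN_sym.
Qed.

Lemma fnegqM (f g : pser) : fnegq (f * g) = (fnegq f : pser) * (fnegq g : pser).
Proof.
apply: funext => n; rewrite /fnegq !mulfE mulr_sumr; apply: eq_bigr => [[i hi]] _ /=.
have e : (-1 : rat) ^+ n = (-1) ^+ i * (-1) ^+ (n - i) by rewrite -exprD subnKC // -ltnS.
by rewrite e; ring.
Qed.
Lemma fnegqD (f g : pser) : fnegq (f + g) = (fnegq f : pser) + (fnegq g : pser).
Proof. by apply: funext => n; rewrite /fnegq !addfE mulrDr. Qed.
Lemma fnegqN (f : pser) : fnegq (- f) = - (fnegq f : pser).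
Proof. by apply: funext => n; rewrite /fnegq !oppfE mulrN. Qed.
Lemma fnegqB (f g : pser) : fnegq (f - g) = (fnegq f : pser) - (fnegq g : pser).
Proof. by rewrite fnegqD fnegqN. Qed.
Lemma fnegq_mono c k : fnegq (fmono c k) = fmono ((-1) ^+ k * c) k.
Proof. by apply: funext => n; rewrite /fnegq /fmono; case: eqP => [->|]; rewrite ?mulr0. Qed.
Lemma fnegq1 : (fnegq (1 : pser) : pser) = 1.
Proof. by rewrite -fmono10 fnegq_mono expr0 mul1r. Qed.
Lemma fnegq_prod I (r : seq I) (F : I -> pser) :
  (fnegq (\prod_(i <- r) F i) : pser) = \prod_(i <- r) (fnegq (F i) : pser).
Proof.
elim: r => [|x r IH]; first by rewrite !big_nil fnegq1.
by rewrite !big_cons fnegqM IH.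
Qed.
Lemma fnegq_inv (f : pser) : f 0%N != 0 -> fnegq (finv f) = finv (fnegq f).
Proof.
move=> h0; apply: (@inv_uniq (fnegq f)).
  by rewrite -fnegqM mulfV // fnegq1.
by rewrite mulfV // /fnegq expr0 mul1r.
Qed.
Lemma fnegq_suminf (T : nat -> pser) : fnegq (fsuminf T) = fsuminf (fun k => fnegq (T k)).
Proof. by apply: funext => n; rewrite /fnegq /fsuminf mulr_sumr. Qed.

Lemma eqN_prod1 N (I : eqType) (r : seq I) (Pr : pred I) (F : I -> pser) :
  (forall i, i \in r -> Pr i -> eqN N (F i) 1) -> eqN N (\prod_(i <- r | Pr i) F i) 1.
Proof.
move=> h; rewrite big_seq_cond; apply: (big_ind (fun x => eqN N x 1)) => //.
  by move=> x y hx hy; rewrite -[1]mulr1; apply: eqN_mul.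
by move=> i /andP [hi hp]; apply: h.
Qed.

Lemma prodinf_eqN (F : nat -> pser) N K : (forall k, eqN k (F k) 1) -> (N < K)%N ->
  eqN N (fprodinf F) (\prod_(k < K) F k).
Proof.
move=> hF hK i hi; rewrite /fprodinf fprodE big_map.
have hiK : (i.+1 <= K)%N by rewrite (leq_ltn_trans hi hK).
rewrite -(big_mkord xpredT) (big_cat_nat (leq0n i.+1) hiK) /=.
rewrite -[X in X i = _](mulr1) /index_iota subn0.
apply: (eqN_mul (@eqN_refl i _)); last exact: leqnn.
apply: eqN_sym; apply: eqN_prod1 => k hk _.
apply: (@eqN_le k); last exact: hF.
by move: hk; rewrite mem_index_iota => /andP [h1 _]; exact: leq_trans (leqnSn _) h1.
Qed.

Lemma suminf_eqN (T : nat -> pser) N K : (forall k i, (i < k)%N -> T k i = 0) -> (N < K)%N ->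
  eqN N (fsuminf T) (\sum_(k < K) T k).
Proof.
move=> hT hK i hi; rewrite /fsuminf sumfE.
have hiK : (i.+1 <= K)%N by rewrite (leq_ltn_trans hi hK).
rewrite -(@big_mkord _ _ _ K xpredT (fun k => T k i)) (big_cat_nat (leq0n i.+1) hiK) /=.
rewrite [X in _ = _ + X]big1_seq ?addr0 ?big_mkord // => k /andP [_].
by rewrite mem_index_iota => /andP [h1 _]; apply: hT.
Qed.

Lemma qpochE c K : (qpoch c 1 2 K : pser) = \prod_(k < K) (qfactor c 1 2 k : pser).
Proof.
by rewrite /qpoch fprodE big_map -(big_mkord xpredT) /index_iota subn0.
Qed.

Lemma qfactor_eqN c k : eqN k (qfactor c 1 2 k) 1.
Proof.
move=> i hi; rewrite /qfactor fsubE subfE /fmono.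
case: eqP => [e|_]; last by rewrite subr0.
by move: hi; rewrite e add1n ltnNge leq_pmull.
Qed.

Lemma qpoch_inf_eqN c N K : (N < K)%N -> eqN N (qpoch_inf c 1 2) (qpoch c 1 2 K).
Proof.
move=> hK; rewrite qpochE; apply: prodinf_eqN => // k; exact: qfactor_eqN.
Qed.

Lemma qpoch0 c K : (qpoch c 1 2 K : pser) 0%N = 1.
Proof.
rewrite qpochE; apply: (big_ind (fun x : pser => x 0%N = 1)) => //.
by move=> x y hx hy; rewrite coef0M hx hy mulr1.
Qed.


Lemma qpochS c K : (qpoch c 1 2 K.+1 : pser) = (qpoch c 1 2 K : pser) * (qfactor c 1 2 K : pser).
Proof. by rewrite !qpochE big_ord_recr. Qed.

Definition qv (K : nat) : pser := fmono 1 (1 + 2 * K).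

Lemma qfactorP K : (qfactor 1 1 2 K : pser) = 1 - qv K. Proof. by []. Qed.
Lemma qfactorM K : (qfactor (-1) 1 2 K : pser) = 1 + qv K.
Proof. by rewrite /qfactor fsubE fmonoN opprK. Qed.

Fixpoint Rs (K : nat) : pser :=
  if K is K'.+1 then (1 + qv K') * Rs K' + fmono 1 (K'.+1 ^ 2) else 0.

Lemma sqS K : (1 + 2 * K + K ^ 2 = K.+1 ^ 2)%N.
Proof. rewrite !expnS !expn0 !muln1. ring. Qed.

Lemma assemble (Gs Hs : nat -> pser) :
  Gs 0%N = 1 -> Hs 0%N = 1 ->
  (forall K, (1 - qv K) * Gs K.+1 = (1 - qv K) * Gs K + qv K * (2 * Gs K - Hs K)) ->
  (forall K, (1 - qv K) * Hs K.+1 = qv K * Hs K) ->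
  forall K, Gs K * qpoch 1 1 2 K = (qpoch (-1) 1 2 K : pser) - Rs K /\
            Hs K * qpoch 1 1 2 K = fmono 1 (K ^ 2).
Proof.
move=> G0 H0 GS HS; elim=> [|K [IG IH]].
  by rewrite /qpoch /= G0 H0 subr0 mulr1.
rewrite !qpochS qfactorP qfactorM /=.
have e1 : Gs K.+1 * ((qpoch 1 1 2 K : pser) * (1 - qv K)) = (qpoch 1 1 2 K : pser) * ((1 - qv K) * Gs K.+1) by ring.
have e2 : Hs K.+1 * ((qpoch 1 1 2 K : pser) * (1 - qv K)) = (qpoch 1 1 2 K : pser) * ((1 - qv K) * Hs K.+1) by ring.
rewrite e1 e2 GS HS.
have e3 : (qpoch 1 1 2 K : pser) * ((1 - qv K) * Gs K + qv K * (2 * Gs K - Hs K)) =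
   (1 - qv K) * (Gs K * qpoch 1 1 2 K) + 2 * qv K * (Gs K * qpoch 1 1 2 K) - qv K * (Hs K * qpoch 1 1 2 K) by ring.
have e4 : (qpoch 1 1 2 K : pser) * (qv K * Hs K) = qv K * (Hs K * qpoch 1 1 2 K) by ring.
rewrite e3 e4 IG IH /qv fmonoM mul1r sqS; split=> //.
move: (fmono 1 (1 + 2 * K) : pser) (qpoch (-1) 1 2 K : pser) (Rs K) (fmono 1 (K.+1 ^ 2) : pser) => a b c e.
ring.
Qed.

Lemma qpoch_neq0 c K : (qpoch c 1 2 K : pser) 0%N != 0.
Proof. by rewrite qpoch0 oner_eq0. Qed.

Definition Ssum (K : nat) : pser :=
  \sum_(k < K) (fmono 1 (k.+1 ^ 2) : pser) * (finv (qpoch (-1) 1 2 k.+1) : pser).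

Lemma BS_R K : (qpoch (-1) 1 2 K : pser) * Ssum K = Rs K.
Proof.
elim: K => [|K IH]; first by rewrite /Ssum big_ord0 mulr0.
rewrite /Ssum big_ord_recr /= -/(Ssum K) mulrDr.
have e : (qpoch (-1) 1 2 K.+1 : pser) * ((fmono 1 (K.+1 ^ 2) : pser) * (finv (qpoch (-1) 1 2 K.+1) : pser))
   = (fmono 1 (K.+1 ^ 2) : pser) * ((qpoch (-1) 1 2 K.+1 : pser) * (finv (qpoch (-1) 1 2 K.+1) : pser)) by ring.
rewrite e mulfV ?qpoch_neq0 // mulr1 qpochS qfactorM -IH; ring.
Qed.

Lemma fnegq_qpoch K : (fnegq (qpoch 1 1 2 K) : pser) = qpoch (-1) 1 2 K.
Proof.
rewrite !qpochE fnegq_prod; apply: eq_bigr => k _.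
rewrite /qfactor fsubE fnegqB fnegq1 fnegq_mono -signr_odd oddD oddM /= expr1 mulr1.
by [].
Qed.

Lemma fnegq_term k :
  (fnegq (fdiv (fmono ((-1) ^+ k.+1) (k.+1 ^ 2)) (qpoch 1 1 2 k.+1)) : pser) =
  (fmono 1 (k.+1 ^ 2) : pser) * (finv (qpoch (-1) 1 2 k.+1) : pser).
Proof.
rewrite /fdiv fmulE fnegqM fnegq_mono fnegq_inv ?qpoch_neq0 // fnegq_qpoch.
congr (_ * _); congr fmono.
rewrite -signr_odd oddX /= -(signr_odd _ k.+1) /=.
by case: (odd k); rewrite ?expr0 ?expr1 ?mulr1 ?mulrNN.
Qed.

Lemma fnegq_Fser_eqN n : eqN n (fnegq Fser) (Ssum n.+1).
Proof.
rewrite /Fser fnegq_suminf.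
have -> : (fun k => fnegq (fdiv (fmono ((-1) ^+ k.+1) (k.+1 ^ 2)) (qpoch 1 1 2 k.+1)))
   = (fun k => (fmono 1 (k.+1 ^ 2) : pser) * (finv (qpoch (-1) 1 2 k.+1) : pser)).
  by apply: funext => k; exact: fnegq_term.
apply: suminf_eqN => // k i hi.
rewrite coef_monoM; case: leqP => // h.
have : (k.+1 <= k.+1 ^ 2)%N by rewrite expnS expn1 leq_pmulr.
by move=> h2; move: (leq_trans h2 h); rewrite ltnNge (ltnW hi).
Qed.

Lemma final_from (Gs Hs : nat -> pser) :
  Gs 0%N = 1 -> Hs 0%N = 1 ->
  (forall K, (1 - qv K) * Gs K.+1 = (1 - qv K) * Gs K + qv K * (2 * Gs K - Hs K)) ->
  (forall K, (1 - qv K) * Hs K.+1 = qv K * Hs K) ->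
  forall n, Gs n.+1 n = rhs_series n.
Proof.
move=> G0 H0 GS HS n.
have [GA _] := assemble G0 H0 GS HS n.+1.
have hB := @qpoch_inf_eqN (-1) n n.+1 (ltnSn n).
have hA : eqN n (finv (qpoch_inf 1 1 2)) (finv (qpoch 1 1 2 n.+1)).
  apply: eqN_sym; apply: eqN_inv; first exact: qpoch_neq0.
  exact: eqN_sym (qpoch_inf_eqN _ (ltnSn n)).
have hF := @fnegq_Fser_eqN n.
have E : rhs_series n = (((qpoch_inf (-1) 1 2 : pser) * (finv (qpoch_inf 1 1 2) : pser)) * (1 - (fnegq Fser : pser))) n by [].
rewrite E (eqN_mul (eqN_mul hB hA) (eqN_add (@eqN_refl n 1) (eqN_opp hF))) //.
set A := (qpoch 1 1 2 n.+1 : pser) in GA *.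
set B := (qpoch (-1) 1 2 n.+1 : pser) in GA *.
have e1 : B * (finv A : pser) * (1 - Ssum n.+1) = (finv A : pser) * (B - B * Ssum n.+1) by ring.
rewrite e1 BS_R -GA.
have e2 : (finv A : pser) * (Gs n.+1 * A) = Gs n.+1 * (A * (finv A : pser)) by ring.
by rewrite e2 mulfV ?mulr1 // /A qpoch_neq0.
Qed.


Definition Yf k c : pser := fun n => (Yc k n c)%:R.
Definition Xf k b c : pser := fun n => (Xc k n b c)%:R.

Lemma YfE k c n : Yf k c n = (Yc k n c)%:R. Proof. by []. Qed.
Lemma XfE k b c n : Xf k b c n = (Xc k n b c)%:R. Proof. by []. Qed.

Lemma Xf_rec k b c : Xf k b c = qv k * (Yf k (fun x => c x && (b ==> ~~ x)) + Xf k false (fun x => c x && (b ==> ~~ x))).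
Proof.
apply: funext => n; rewrite /qv coef_monoM add1n /Xf Xc_rec.
case: leqP => h; first by [].
by rewrite mul1r natrD.
Qed.

Lemma Yf_rec k c : Yf k.+1 c = Yf k (fun _ => c false) + Xf k false c + Xf k true c.
Proof. by apply: funext => n; rewrite !addfE !YfE !XfE Yc_rec !natrD. Qed.

Lemma Yf_ext k c1 c2 : c1 =1 c2 -> Yf k c1 = Yf k c2.
Proof. by move=> h; apply: funext => n; rewrite !YfE (Yc_ext _ _ h). Qed.
Lemma Xf_ext k b c1 c2 : c1 =1 c2 -> Xf k b c1 = Xf k b c2.
Proof. by move=> h; apply: funext => n; rewrite !XfE (Xc_ext _ _ _ h). Qed.

Lemma Yf_false k : Yf k (fun _ => false) = 0.
Proof. by apply: funext => n; rewrite YfE Yc_false zerofE. Qed.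
Lemma Xf_false k b : Xf k b (fun _ => false) = 0.
Proof.
apply: funext => n; rewrite XfE zerofE /Xc count0 // => s _.
by rewrite !andbF.
Qed.

Lemma Yf_split k : Yf k (fun _ => true) = Yf k id + Yf k negb.
Proof. by apply: funext => n; rewrite addfE !YfE Yc_split natrD. Qed.

Lemma Yf0 (c : bool -> bool) : c true -> Yf 0 c = 1.
Proof. by move=> hc; apply: funext => n; rewrite YfE Yc0 //; case: n. Qed.

Definition Gs K := Yf K (fun _ => true).
Definition Hs K := Yf K id.

Lemma GS K : (1 - qv K) * Gs K.+1 = (1 - qv K) * Gs K + qv K * (2 * Gs K - Hs K).
Proof.
rewrite /Gs /Hs Yf_rec /=.
set q := qv K; set G := Yf K (fun _ => true); set H := Yf K id.
set N := Yf K negb.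
set XF := Xf K false (fun _ => true); set XT := Xf K true (fun _ => true).
set XFN := Xf K false negb.
have e1 : XF = q * (G + XF).
  by rewrite {1}/XF Xf_rec (@Yf_ext _ _ (fun _ => true)) // (@Xf_ext _ _ _ (fun _ => true)).
have e2 : XFN = q * (N + XFN).
  by rewrite {1}/XFN Xf_rec (@Yf_ext _ _ negb) ?(@Xf_ext _ _ _ negb) // => x; case: x.
have e3 : XT = q * (N + XFN).
  by rewrite /XT Xf_rec (@Yf_ext _ _ negb) ?(@Xf_ext _ _ _ negb) // => x; case: x.
have h1 : (1 - q) * XF = q * G by rewrite mulrBl mul1r {1}e1; ring.
have h2 : (1 - q) * XFN = q * N by rewrite mulrBl mul1r {1}e2; ring.
have h3 : (1 - q) * XT = q * N.
  rewrite e3; have -> : (1 - q) * (q * (N + XFN)) = q * ((1 - q) * N + (1 - q) * XFN) by ring.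
  rewrite h2; ring.
have hN : N = G - H by rewrite /G Yf_split -/H -/N; ring.
have -> : (1 - q) * (G + XF + XT) = (1 - q) * G + (1 - q) * XF + (1 - q) * XT by ring.
rewrite h1 h3 hN; ring.
Qed.

Lemma HS K : (1 - qv K) * Hs K.+1 = qv K * Hs K.
Proof.
rewrite /Hs Yf_rec /= Yf_false add0r.
set q := qv K; set H := Yf K id.
set XF := Xf K false id; set XT := Xf K true id.
have e1 : XF = q * (H + XF).
  by rewrite {1}/XF Xf_rec (@Yf_ext _ _ id) ?(@Xf_ext _ _ _ id) // => x; rewrite andbT.
have e3 : XT = 0.
  rewrite /XT Xf_rec (@Yf_ext _ _ (fun _ => false)) ?(@Xf_ext _ _ _ (fun _ => false)) //;
    last by move=> x; case: x.
  by rewrite Yf_false Xf_false addr0 mulr0.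
  by move=> x; case: x.
rewrite e3 addr0 mulrBl mul1r {1}e1; ring.
Qed.

Theorem mainTheorem1 : forall n : nat, Mbar_o n = rhs_series n.
Proof.
move=> n.
rewrite -(@final_from Gs Hs (Yf0 (c := fun _ => true) erefl) (Yf0 (c := id) erefl) GS HS n).
rewrite /Mbar_o /Gs /Yf (@mbar_Yc n n.+1) //.
rewrite mulSn; exact: leq_addr.
Qed.
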